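(* Let $p\in(0,1)$ and let $\beta:\mathbb{N}\to\mathbb{R}$ be a function such that $|\beta(n)|=O(\sqrt{n})$ and $\lim_{n\to\infty}|\beta(n)|=\infty$. Then for all sufficiently large $n$, $$\frac{B^{\lfloor np\rfloor}_n(p)}{B^{\lfloor np\rfloor-\lfloor\beta(n)\rfloor}_n(p)}\leq \exp\!\Big(\frac{1}{p(1-p)}\cdot\frac{\lfloor\beta(n)\rfloor^2}{n}\Big).$$
   Context: For $p\in(0,1)$, $n\in\mathbb{N}$ and $i\in\mathbb{Z}$, $B_n^i(p)=\binom{n}{i}p^i(1-p)^{n-i}$ if $0\leq i\leq n$ and $B_n^i(p)=0$ otherwise. For $f,g:\mathbb{N}\to\mathbb{R}^+_0$, $f(n)=O(g(n))$ means there is $C>0$ with $f(n)\leq Cg(n)$ for all sufficiently large $n$. *)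

(* Defs.v *)
From HB Require Import structures.
From mathcomp Require Import all_boot all_order all_algebra.
From mathcomp Require Import all_classical all_reals all_analysis.
Set Implicit Arguments. Unset Strict Implicit. Unset Printing Implicit Defensive.
Import Order.TTheory GRing.Theory Num.Theory.
Local Open Scope ring_scope.

Definition binomB (R : realType) (p : R) (n : nat) (i : int) : R :=
  if (0 <= i) && (i <= n%:Z) then
    ('C(n, `|i|%N))%:R * p ^+ `|i|%N * (1 - p) ^+ (n - `|i|%N)
  else 0.

(* Main.v *)
Require Import Defs.
From HB Require Import structures.
From mathcomp Require Import all_boot all_order all_algebra.
From mathcomp Require Import all_classical all_reals all_analysis.
From mathcomp Require Import ring lra.
Import Order.TTheory GRing.Theory Num.Theory.
Import numFieldNormedType.Exports.
Local Open Scope classical_set_scope.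
Local Open Scope ring_scope.

Definition Bn (R : realType) (p : R) (n i : nat) : R :=
  ('C(n, i))%:R * p ^+ i * (1 - p) ^+ (n - i).
Arguments Bn {R}.

Lemma binomB_nat (R : realType) (p : R) n (i : nat) :
  binomB p n i%:Z = Bn p n i.
Proof.
rewrite /binomB /Bn /=; case: ifP => [//|/negbT].
rewrite lez_nat -ltnNge => /bin_small ->; by rewrite !mul0r.
Qed.

Lemma Bn_ge0 (R : realType) (p : R) n i : 0 < p < 1 -> 0 <= Bn p n i.
Proof.
move=> /andP[p0 p1]; rewrite /Bn; apply: mulr_ge0; first apply: mulr_ge0.
- by rewrite ler0n.
- by apply: exprn_ge0; rewrite ltW.
- by apply: exprn_ge0; rewrite subr_ge0 ltW.
Qed.

Lemma Bn_gt0 (R : realType) (p : R) n i : 0 < p < 1 -> (i <= n)%N -> 0 < Bn p n i.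
Proof.
move=> /andP[p0 p1] hi; rewrite /Bn; apply: mulr_gt0; first apply: mulr_gt0.
- by rewrite ltr0n bin_gt0.
- by apply: exprn_gt0.
- by apply: exprn_gt0; rewrite subr_gt0.
Qed.

Lemma Bn_rec (R : realType) (p : R) n i : (i < n)%N ->
  Bn p n i.+1 * (i.+1%:R * (1 - p)) = Bn p n i * ((n - i)%:R * p).
Proof.
move=> hi.
have H : (i.+1)%:R * ('C(n, i.+1))%:R = (n - i)%:R * ('C(n, i))%:R :> R
  by rewrite -!natrM mul_bin_left.
have Hni : (n - i = (n - i.+1).+1)%N by rewrite subnSK.
rewrite /Bn.
rewrite [X in X = _](_ : _ = ((i.+1)%:R * ('C(n, i.+1))%:R) * (p ^+ i * p * (1 - p) ^+ (n - i.+1) * (1 - p))); last by rewrite exprS; ring.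
rewrite H Hni exprS; ring.
Qed.

Lemma step_down (R : realType) (p : R) n i : 0 < p < 1 -> (i < n)%N ->
  Bn p n i.+1 <= Bn p n i * expR (((n - i)%:R * p - i.+1%:R * (1 - p)) / (i.+1%:R * (1 - p))).
Proof.
move=> hp hi; have /andP[p0 p1] := hp.
have d0 : 0 < i.+1%:R * (1 - p) by apply: mulr_gt0; rewrite ?ltr0n // subr_gt0.
have -> : Bn p n i.+1 = Bn p n i * ((n - i)%:R * p / (i.+1%:R * (1 - p))).
  by rewrite mulrA -(@Bn_rec _ p _ _ hi) mulfK // gt_eqF.
apply: ler_wpM2l; first exact: Bn_ge0.
set f := _ / _.
have -> : ((n - i)%:R * p - i.+1%:R * (1 - p)) / (i.+1%:R * (1 - p)) = f - 1.
  by rewrite /f; field; apply/andP; split; apply/negP => /eqP h; have := ler0n R i; lra.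
by have := expR_ge1Dx (f - 1); rewrite addrC subrK.
Qed.

Lemma step_up (R : realType) (p : R) n i : 0 < p < 1 -> (i < n)%N ->
  Bn p n i <= Bn p n i.+1 * expR ((i.+1%:R * (1 - p) - (n - i)%:R * p) / ((n - i)%:R * p)).
Proof.
move=> hp hi; have /andP[p0 p1] := hp.
have d0 : 0 < (n - i)%:R * p by apply: mulr_gt0; rewrite ?ltr0n ?subn_gt0.
have -> : Bn p n i = Bn p n i.+1 * (i.+1%:R * (1 - p) / ((n - i)%:R * p)).
  by rewrite mulrA (@Bn_rec _ p _ _ hi) mulfK // gt_eqF.
apply: ler_wpM2l; first exact: Bn_ge0.
set f := _ / _.
have -> : (i.+1%:R * (1 - p) - (n - i)%:R * p) / ((n - i)%:R * p) = f - 1.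
  by rewrite /f; field; apply/andP; split; apply/negP => /eqP h; [|have := ltr0n R (n - i); rewrite subn_gt0 hi]; lra.
by have := expR_ge1Dx (f - 1); rewrite addrC subrK.
Qed.

Lemma chain_down (R : realType) (p : R) (n kn bn : nat) : 0 < p < 1 ->
  kn%:R <= n%:R * p -> n%:R * p < kn%:R + 1 -> (bn <= kn)%N ->
  0 < n%:R * p - bn%:R ->
  forall m, (m <= bn)%N ->
  Bn p n kn <= Bn p n (kn - m) *
     expR (m%:R * (m%:R + 3) / (2 * ((1 - p) * (n%:R * p - bn%:R)))).
Proof.
move=> hp hk1 hk2 hb hD; have /andP[p0 p1] := hp.
set r := n%:R * p in hk1 hk2 hD *.
set D := (1 - p) * (r - bn%:R).
have D0 : 0 < D by apply: mulr_gt0; rewrite // subr_gt0.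
have knn : (kn <= n)%N.
  rewrite -(ler_nat R); apply: (le_trans hk1); rewrite /r.
  have : 0 <= n%:R :> R := ler0n R n. nra.
elim=> [_|m IH hm].
  by rewrite subn0 mul0r mul0r expR0 mulr1.
have mkn : (m < kn)%N by apply: leq_trans hb.
have := IH (ltnW hm); set g := expR _ => H1.
have H2 := @step_down _ p n (kn - m.+1) hp.
rewrite subnSK // in H2.
have H3 := H2 (leq_trans (leq_subr _ _) knn).
apply: (le_trans H1).
set e := expR _ in H3.
have e1 : e <= expR ((m%:R + 2) / D).
  rewrite ler_expR ler_pdivrMr; last first.
    by apply: mulr_gt0; rewrite ?subr_gt0 // ltr0n subn_gt0.
  rewrite mulrAC ler_pdivlMr //.
  have E1 : (n - (kn - m.+1))%:R = n%:R - kn%:R + m%:R + 1 :> R.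
    rewrite natrB; last exact: (leq_trans (leq_subr _ _) knn).
    by rewrite natrB // -natr1; ring.
  have E2 : (kn - m)%:R = kn%:R - m%:R :> R by rewrite natrB // ltnW.
  rewrite E1 E2.
  have hm' : m.+1%:R <= bn%:R :> R by rewrite ler_nat.
  rewrite -natr1 in hm' *.
  have h1 : 0 <= (kn%:R - m%:R) * (1 - p) - D.
    have -> : (kn%:R - m%:R) * (1 - p) - D = (1 - p) * (kn%:R - m%:R - (r - bn%:R)) by rewrite /D; ring.
    apply: mulr_ge0; lra.
  have h2 : 0 <= m%:R + 2 - ((n%:R - kn%:R + m%:R + 1) * p - (kn%:R - m%:R) * (1 - p)).
    rewrite /r in hk2; nra.
  have h3 := mulr_ge0 (ltW D0) h2.
  have : 0 <= m%:R :> R := ler0n R m.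
  move=> h0; have h4 : 0 <= m%:R + 2 :> R by lra.
  have h5 := mulr_ge0 h4 h1.
  clearbody D; nra.
apply: le_trans (ler_wpM2r (expR_ge0 _) (le_trans H3 (ler_wpM2l _ e1))) _.
  exact: Bn_ge0.
rewrite -mulrA -expRD /g; apply: ler_wpM2l; first exact: Bn_ge0.
rewrite ler_expR le_eqVlt; apply/orP; left; apply/eqP.
rewrite -natr1 -/r -/D; by field; rewrite gt_eqF.
Qed.

Lemma chain_up (R : realType) (p : R) (n kn cn : nat) : 0 < p < 1 ->
  kn%:R <= n%:R * p -> 0 < n%:R - n%:R * p - cn%:R ->
  forall m, (m <= cn)%N ->
  Bn p n kn <= Bn p n (kn + m) *
     expR (m%:R * (m%:R + 1) / (2 * (p * (n%:R - n%:R * p - cn%:R)))).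
Proof.
move=> hp hk1 hE; have /andP[p0 p1] := hp.
set r := n%:R * p in hk1 hE *.
set E := p * (n%:R - r - cn%:R).
have E0 : 0 < E by apply: mulr_gt0.
have kcn : (kn + cn < n)%N.
  rewrite -(ltr_nat R) natrD; lra.
elim=> [_|m IH hm].
  by rewrite addn0 mul0r mul0r expR0 mulr1.
have := IH (ltnW hm); set g := expR _ => H1.
have H2 := @step_up _ p n (kn + m) hp.
have kmn : (kn + m < n)%N by apply: leq_ltn_trans kcn; rewrite leq_add2l ltnW.
have H3 := H2 kmn.
rewrite -addnS in H3.
apply: (le_trans H1).
set e := expR _ in H3.
have e1 : e <= expR ((m%:R + 1) / E).
  have hm' : m.+1%:R <= cn%:R :> R by rewrite ler_nat.
  rewrite -natr1 in hm'; rewrite /e.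
  have E1 : (n - (kn + m))%:R = n%:R - kn%:R - m%:R :> R.
    rewrite natrB; last exact: ltnW.
    by rewrite natrD; ring.
  rewrite ler_expR ler_pdivrMr; last first.
    rewrite E1; apply: mulr_gt0 => //; lra.
  rewrite mulrAC ler_pdivlMr // E1 natrD -natr1.
  have h1 : 0 <= (n%:R - kn%:R - m%:R) * p - E.
    have -> : (n%:R - kn%:R - m%:R) * p - E = p * (r - kn%:R + cn%:R - m%:R) by rewrite /E; ring.
    apply: mulr_ge0; lra.
  have h2 : 0 <= m%:R + 1 - ((kn%:R + m%:R + 1) * (1 - p) - (n%:R - kn%:R - m%:R) * p).
    rewrite /r in hk1; nra.
  have h3 := mulr_ge0 (ltW E0) h2.
  have h0 : 0 <= m%:R :> R := ler0n R m.
  have h4 : 0 <= m%:R + 1 :> R by lra.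
  have h5 := mulr_ge0 h4 h1.
  clearbody E; nra.
apply: le_trans (ler_wpM2r (expR_ge0 _) (le_trans H3 (ler_wpM2l _ e1))) _.
  exact: Bn_ge0.
rewrite -mulrA -expRD /g; apply: ler_wpM2l; first exact: Bn_ge0.
rewrite ler_expR le_eqVlt; apply/orP; left; apply/eqP.
rewrite -natr1 -/r -/E; by field; rewrite gt_eqF.
Qed.

Lemma fin_down (R : realType) (p b n : R) : 0 < p < 1 -> 0 < n -> 6 <= b ->
  4 * b <= n * p ->
  b * (b + 3) / (2 * ((1 - p) * (n * p - b))) <= (p * (1 - p))^-1 * (b ^+ 2 / n).
Proof.
move=> /andP[p0 p1] n0 b6 hb.
have q0 : 0 < 1 - p by lra.
have D0 : 0 < 2 * ((1 - p) * (n * p - b)) by apply: mulr_gt0 => //; apply: mulr_gt0 => //; lra.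
have P0 : 0 < p * (1 - p) * n by apply: mulr_gt0 => //; apply: mulr_gt0.
have -> : (p * (1 - p))^-1 * (b ^+ 2 / n) = b ^+ 2 / (p * (1 - p) * n).
  by field; rewrite !gt_eqF.
rewrite ler_pdivrMr // mulrAC ler_pdivlMr //.
set r := n * p in hb D0 *.
have h : 0 <= b * r - 3 * r - 2 * b ^+ 2.
  have h1 : 0 <= (b - 6) * r by apply: mulr_ge0; lra.
  have h2 : 0 <= b * (r - 4 * b) by apply: mulr_ge0; lra.
  nra.
have qb : 0 <= (1 - p) * b by apply: mulr_ge0; lra.
have h3 := mulr_ge0 qb h.
have -> : p * (1 - p) * n = (1 - p) * r by rewrite /r; ring.
nra.
Qed.

Lemma fin_up (R : realType) (p c n : R) : 0 < p < 1 -> 0 < n -> 2 <= c ->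
  4 * c <= n - n * p ->
  c * (c + 1) / (2 * (p * (n - n * p - c))) <= (p * (1 - p))^-1 * (c ^+ 2 / n).
Proof.
move=> /andP[p0 p1] n0 c2 hc.
have q0 : 0 < 1 - p by lra.
have D0 : 0 < 2 * (p * (n - n * p - c)) by apply: mulr_gt0 => //; apply: mulr_gt0 => //; lra.
have P0 : 0 < p * (1 - p) * n by apply: mulr_gt0 => //; apply: mulr_gt0.
have -> : (p * (1 - p))^-1 * (c ^+ 2 / n) = c ^+ 2 / (p * (1 - p) * n).
  by field; rewrite !gt_eqF.
rewrite ler_pdivrMr // mulrAC ler_pdivlMr //.
set s := n - n * p in hc D0 *.
have h : 0 <= c * s - s - 2 * c ^+ 2.
  have h1 : 0 <= (c - 2) * s by apply: mulr_ge0; lra.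
  have h2 : 0 <= c * (s - 4 * c) by apply: mulr_ge0; lra.
  nra.
have qb : 0 <= p * c by apply: mulr_ge0; lra.
have h3 := mulr_ge0 qb h.
have -> : p * (1 - p) * n = p * s by rewrite /s; ring.
nra.
Qed.

Lemma ev_sqrt (R : realType) (a C : R) : 0 < a -> 0 < C ->
  \forall n \near \oo, C * Num.sqrt (n%:R) + 1 <= n%:R * a.
Proof.
move=> a0 C0.
set M : R := (2 * C / a) ^+ 2 + 2 / a.
have M0 : 0 <= M by rewrite /M; apply: addr_ge0; [exact: sqr_ge0| apply: divr_ge0; lra].
apply: filterS (nbhs_infty_ge (Num.Def.archi_bound M)) => n hN.
have nM : M <= n%:R.
  apply/ltW/(lt_le_trans (archi_boundP M0)); by rewrite ler_nat.
set s := Num.sqrt n%:R.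
have s2 : s ^+ 2 = n%:R by rewrite sqr_sqrtr // ler0n.
have s0 : 0 <= s := sqrtr_ge0 _.
have hs : 2 * C / a <= s.
  have : Num.sqrt ((2 * C / a) ^+ 2) <= s.
    rewrite ler_sqrt ?ler0n //; apply: le_trans nM; rewrite /M.
    have : 0 <= 2 / a by apply: divr_ge0; lra.
    lra.
  by rewrite sqrtr_sqr ger0_norm //; apply: divr_ge0 => //; lra.
have h1 : 2 * C <= a * s by rewrite -ler_pdivrMl // mulrC.
have h2 : 2 <= a * n%:R.
  have : 2 / a <= n%:R by apply: le_trans nM; rewrite /M; have := sqr_ge0 (2 * C / a); lra.
  by rewrite ler_pdivrMr // mulrC.
rewrite -s2 in h2 *.
have h3 : 0 <= (a * s - 2 * C) * s by apply: mulr_ge0; lra.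
nra.
Qed.

Theorem lemma3 (R : realType) (p : R) (beta : nat -> R) :
  0 < p < 1 ->
  (exists2 C : R, 0 < C &
     \forall n \near \oo, `|beta n| <= C * Num.sqrt (n%:R)) ->
  ((fun n => `|beta n|) @ \oo --> +oo) ->
  \forall n \near \oo,
    binomB p n (Num.floor (n%:R * p))
      / binomB p n (Num.floor (n%:R * p) - Num.floor (beta n))
    <= expR ((p * (1 - p))^-1 * ((Num.floor (beta n))%:~R ^+ 2 / n%:R)).
Proof.
move=> hp [C C0 HC] Hb; have /andP[p0 p1] := hp.
have q0 : 0 < 1 - p by lra.
have E1 : \forall n \near \oo, 7 <= `|beta n| by move/cvgryPge: Hb; apply.
have E3 := @ev_sqrt _ _ C (divr_gt0 p0 (ltr0n R 4)) C0.
have E4 := @ev_sqrt _ _ C (divr_gt0 q0 (ltr0n R 4)) C0.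
have E5 := nbhs_infty_ge 1.
apply: filterS (filterI E1 (filterI HC (filterI E3 (filterI E4 E5)))).
move=> n [h7 [hC [h3 [h4 h5]]]].
set x := beta n in h7 hC *.
have n0 : 0 < n%:R :> R by rewrite ltr0n.
set r := n%:R * p in h3 *.
have r0 : 0 <= r by apply: mulr_ge0; rewrite ?ler0n // ltW.
set k := Num.floor r.
have k0 : 0 <= k by rewrite floor_ge0.
have ek : k = (`|k|%N)%:Z by rewrite gez0_abs.
set kn := `|k|%N in ek.
have hk1 : kn%:R <= r by have := floor_le r; rewrite -/k ek.
have hk2 : r < kn%:R + 1.
  have : k < k + 1 by rewrite ltzD1.
  by rewrite floor_lt_int intrD -/k ek.
set b := Num.floor x.
have hb1 : b%:~R <= x := floor_le x.
have hb2 : x < b%:~R + 1.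
  have : b < b + 1 by rewrite ltzD1.
  by rewrite floor_lt_int intrD.
have hsum : `|x| + 1 <= n%:R * (p / 4) /\ `|x| + 1 <= n%:R * ((1 - p) / 4) by split; lra.
rewrite ek binomB_nat.
case: (lerP 0 b) => hb0.
- have eb : b = (`|b|%N)%:Z by rewrite gez0_abs.
  set bn := `|b|%N in eb.
  have x0 : 0 <= x by rewrite -floor_ge0.
  rewrite ger0_norm // in h7 hsum.
  rewrite eb in hb1 hb2 *.
  have hbn6 : 6 <= bn%:R :> R by move: hb1 hb2 => /= *; lra.
  have hbn : 4 * bn%:R <= r by move: hb1 hsum => /= *; rewrite /r; lra.
  case: (leqP bn kn) => hbk; last first.
    rewrite /binomB.
    have -> : (0 <= kn%:Z - bn%:Z) = false.
      by apply/negbTE; rewrite -ltNge subr_lt0 ltz_nat.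
    by rewrite /= invr0 mulr0 expR_ge0.
  rewrite subzn // binomB_nat.
  have hD : 0 < r - bn%:R by lra.
  have Hc := @chain_down _ p n kn bn hp hk1 hk2 hbk hD bn (leqnn bn).
  have knn : (kn <= n)%N.
    rewrite -(ler_nat R); apply: (le_trans hk1); rewrite /r.
    have : 0 <= n%:R :> R := ler0n R n. nra.
  rewrite ler_pdivrMr; last by apply: Bn_gt0 => //; apply: leq_trans (leq_subr _ _) knn.
  rewrite mulrC; apply: le_trans Hc _; apply: ler_wpM2l; first exact: Bn_ge0.
  rewrite ler_expR; exact: fin_down.
- have eb : b = - (`|b|%N)%:Z by rewrite lez0_abs ?opprK // ltW.
  set cn := `|b|%N in eb.
  have x0 : x < 0 by rewrite -floor_lt0.
  rewrite ltr0_norm // in h7 hsum.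
  rewrite eb intrN in hb1 hb2.
  rewrite eb intrN sqrrN opprK -PoszD binomB_nat.
  have hcn : 4 * cn%:R <= n%:R - r by move: hb1 hsum => /= *; rewrite /r; lra.
  have hcn2 : 2 <= cn%:R :> R by move: hb1 => /= *; lra.
  have hE : 0 < n%:R - r - cn%:R by lra.
  have Hc := @chain_up _ p n kn cn hp hk1 hE cn (leqnn cn).
  have kcn : (kn + cn <= n)%N.
    by rewrite -(ler_nat R) natrD; lra.
  rewrite ler_pdivrMr; last by apply: Bn_gt0.
  rewrite mulrC; apply: le_trans Hc _; apply: ler_wpM2l; first exact: Bn_ge0.
  rewrite ler_expR; exact: fin_up.
Qed.
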